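(* Let $n\ge3$ and let $c\in\mathbb{Z}_{\ge0}^n$ be an SR state on $K_n^0$ with $\max_i c_i<n-1$. Let $a\in[n]$ be an index with $c_a=\max_i c_i$, and $b\in[n]\setminus\{a\}$ an index with $c_b=\max_{i\ne a}c_i$. Define $c'$ by $c'_a=c_a+1$, $c'_b=c_b-1$ and $c'_i=c_i$ for $i\notin\{a,b\}$. Then $c'$ is an SR state on $K_n^0$ (in particular $c_b\ge1$).
   Context: $K_n^0$ is the complete graph on vertex set $\{0,1,\dots,n\}$ with sink $0$; every vertex has degree $n$. A configuration is $c\in\mathbb{Z}_{\ge0}^n$, stable if $c_i\le n-1$ for all $i$. SSM (parameter $p\in(0,1)$): an unstable vertex $i$, independently for each incident edge, sends one grain along it with probability $p$ (grains to the sink disappear), otherwise keeps it. The SSM Markov chain on stable configurations adds a grain at vertex $i$ with probability $\mu_i>0$ and then stabilises; SR = recurrent state of this chain. Known fact: a stable $c$ on $K_n^0$ is SR iff there is an orientation $\mathcal{O}$ of the complete graph $K_n$ on $\{1,\dots,n\}$ (a tournament) with $c_i\ge\mathrm{in}^{\mathcal{O}}_i$ for all $i$, where $\mathrm{in}^{\mathcal{O}}_i$ is the in-degree of $i$. *)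

(* Defs.v *)
From Stdlib Require Import Relations.
From mathcomp Require Import all_boot.
Set Implicit Arguments. Unset Strict Implicit. Unset Printing Implicit Defensive.

(* K_n^0: vertex set {0,...,n}, sink 0.  The non-sink vertex k (1 <= k <= n)
   is represented by the ordinal (k-1) : 'I_n.  Every vertex has degree n (adjacent to all other non-sink
   vertices and to the sink). *)
Definition config (n : nat) := 'I_n -> nat.

Definition stable (n : nat) (c : config n) : Prop := forall i, c i <= n.-1.

(* One SSM toppling event with positive probability: an unstable vertex i
   (c_i >= deg i = n) sends one grain along each edge of a chosen subset of its
   incident edges: the edges to the non-sink vertices in S (i \notin S), and
   the edge to the sink iff k = true (that grain disappears).  Every subset has
   probability p^|E|(1-p)^(n-|E|) > 0 since 0 < p < 1. *)
Definition topple_step (n : nat) (u v : config n) : Prop :=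
  exists i : 'I_n, n <= u i /\
    exists (S : {set 'I_n}) (k : bool), i \notin S /\
      forall j, v j = if j == i then u i - (#|S| + k) else u j + (j \in S).

Definition add_grain (n : nat) (c : config n) (i : 'I_n) : config n :=
  fun j => if j == i then (c j).+1 else c j.

Definition ssm_stabilises_to (n : nat) (u v : config n) : Prop :=
  clos_refl_trans (config n) (@topple_step n) u v /\ stable v.

(* positive-probability transition of the SSM Markov chain on stable
   configurations (each mu_i > 0, so every vertex can receive the grain) *)
Definition ssm_chain_step (n : nat) (c c' : config n) : Prop :=
  stable c /\ exists i : 'I_n, ssm_stabilises_to (add_grain c i) c'.

Definition ssm_reach (n : nat) := clos_refl_trans (config n) (@ssm_chain_step n).

(* SR: recurrent state of the (finite-state) SSM Markov chain, i.e. a stable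
   state c such that every state reachable from c can reach c back. *)
Definition SR (n : nat) (c : config n) : Prop :=
  stable c /\ forall d, ssm_reach c d -> ssm_reach d c.

(* Main.v *)
Require Import Defs.
From mathcomp Require Import all_boot.
From mathcomp Require Import zify.
From Stdlib Require Import Relations FunctionalExtensionality.
Set Implicit Arguments. Unset Strict Implicit. Unset Printing Implicit Defensive.
Set Implicit Arguments. Unset Strict Implicit. Unset Printing Implicit Defensive.

Definition indeg {n} (O : rel 'I_n) (j : 'I_n) := #|[set x | O x j]|.
Definition tourn {n} (O : rel 'I_n) :=
  (forall u, O u u = false) /\ (forall u v, u != v -> O v u = ~~ O u v).
Definition TD {n} (c : config n) :=
  exists O : rel 'I_n, tourn O /\ forall j, indeg O j <= c j.

Lemma indeg_le n (O : rel 'I_n) j : tourn O -> indeg O j <= n.-1.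
Proof.
case=> Oirr _; rewrite /indeg -[X in _ <= X.-1]card_ord -(cardsC1 j).
apply: subset_leq_card; apply/subsetP => x; rewrite !inE.
by apply: contraTneq => ->; rewrite Oirr.
Qed.

Lemma TD_topple n (u v : config n) : topple_step u v -> TD u -> TD v.
Proof.
case=> i [hi [S [k [iS hv]]]] [O [[Oirr Otot] hO]].
pose O' := fun x y : 'I_n => if x == i then y \in S
   else if y == i then x \notin S else O x y.
exists O'; split.
- split.
  + move=> x; rewrite /O'; case: (eqVneq x i) => [->|_]; first by rewrite (negbTE iS).
    by rewrite Oirr.
  + move=> x y xy; rewrite /O'.
    case: (eqVneq x i) => [exi|xi]; case: (eqVneq y i) => [eyi|yi] //.
    * by move: xy; rewrite exi eyi eqxx.
    * by rewrite negbK.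
    * by rewrite Otot.
- move=> j; rewrite hv /indeg. case: (eqVneq j i) => [->|ji].
  + have sub: [set x | O' x i] \subset ~: (i |: S).
      apply/subsetP => x; rewrite !inE /O'.
      case: (eqVneq x i) => [->|xi]; first by rewrite (negbTE iS).
      by rewrite eqxx.
    have := subset_leq_card sub.
    have := cardsC (i |: S); rewrite cardsU1 iS card_ord.
    rewrite /nat_of_bool; case: k {hv} => h1 h2; move: hi h1 h2; move: (u i) (#|[set x | O' x i]|) (#|S|) (#|~: (i |: S)|) => U A B C; lia.
  + have sub: [set x | O' x j] \subset
        [set x | O x j] :|: [set x | (x == i) && (j \in S)].
      apply/subsetP => x; rewrite !inE /O'.
      case: (eqVneq x i) => [->|xi] /=; first by move=> ->; rewrite orbT.
      by rewrite (negbTE ji) => ->.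
    apply: leq_trans (subset_leq_card sub) _.
    apply: leq_trans (leq_card_setU _ _) _.
    apply: leq_add; first exact: hO.
    case: (boolP (j \in S)) => jS.
    * by rewrite (_ : [set x | _] = [set i]) ?cards1 //; apply/setP => x; rewrite !inE andbT.
    * by rewrite (_ : [set x | _] = set0) ?cards0 //; apply/setP => x; rewrite !inE andbF.
Qed.

Definition flip n (O : rel 'I_n) (x z : 'I_n) : rel 'I_n := fun u v =>
  if (u == x) && (v == z) then false else if (u == z) && (v == x) then true else O u v.

Lemma flip_tourn n (O : rel 'I_n) x z : tourn O -> O x z -> tourn (flip O x z).
Proof.
move=> [Oirr Otot] Oxz.
have xz : x != z by apply: contraTneq Oxz => ->; rewrite Oirr.
have zx : z != x by rewrite eq_sym.
split.
- move=> u; rewrite /flip; case: (eqVneq u x) => [->|ux] /=.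
    by rewrite (negbTE xz) Oirr.
  by rewrite andbF Oirr; case: (u == z).
- move=> u v uv; rewrite /flip.
  case: (eqVneq u x) => [ux|ux]; case: (eqVneq v z) => [vz|vz];
  case: (eqVneq u z) => [uz|uz]; case: (eqVneq v x) => [vx|vx]; subst => //=;
  rewrite ?eqxx ?(negbTE xz) ?(negbTE zx) ?andbF ?andbT /= in uv *;
  rewrite ?(negbTE ux) ?(negbTE uz) ?(negbTE vx) ?(negbTE vz) ?andbF ?andbT /=.
  all: try by [].
  all: try by rewrite Otot // Oxz.
  all: try by apply: Otot.
Qed.

Lemma flip_indeg n (O : rel 'I_n) x z : tourn O -> O x z ->
  forall v, indeg (flip O x z) v + (v == z) = indeg O v + (v == x).
Proof.
move=> [Oirr Otot] Oxz.
have xz : x != z by apply: contraTneq Oxz => ->; rewrite Oirr.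
have zx : z != x by rewrite eq_sym.
move=> v; rewrite /indeg.
case: (eqVneq v z) => [->|vz].
- rewrite (negbTE zx) (cardsD1 x [set u | O u z]) inE Oxz.
  rewrite (_ : [set u | flip O x z u z] = [set u | O u z] :\ x); first by rewrite addn0 addnC.
  apply/setP => u; rewrite !inE /flip eqxx ?(negbTE zx) !andbF andbT.
  by case: (u == x).
case: (eqVneq v x) => [->|vx].
- rewrite (_ : [set u | flip O x z u x] = z |: [set u | O u x]).
    by rewrite cardsU1 inE Otot // Oxz /= addn0 addnC.
  apply/setP => u; rewrite !inE /flip eqxx ?(negbTE zx) ?andbF ?andbT /=; rewrite (negbTE xz) andbF.
  by case: (u == z).
rewrite !addn0; apply: eq_card => u.
by rewrite !inE /flip (negbTE vz) (negbTE vx) !andbF.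
Qed.

Lemma path_flip n (O : rel 'I_n) x z0 p : forall z,
  x \notin z :: p -> path O z p -> path (flip O x z0) z p.
Proof.
elim: p => [|y p IH] z //= .
rewrite !inE negb_or => /andP[xz]; rewrite negb_or => /andP[xy xp] /andP[Ozy pp].
apply/andP; split; last by apply: IH => //; rewrite inE negb_or xy.
by rewrite /flip eq_sym (negbTE xz) /= [y == x]eq_sym (negbTE xy) andbF.
Qed.

Lemma rev_tpath n (p : seq 'I_n) : forall (O : rel 'I_n) x, tourn O ->
  path O x p -> uniq (x :: p) ->
  exists O', tourn O' /\ forall v, indeg O' v + (v == last x p) = indeg O v + (v == x).
Proof.
elim: p => [|z p IH] O x tO /=.
  by move=> _ _; exists O; split.
move=> /andP[Oxz pp] /andP[xzp uzp].
have tO1 := flip_tourn tO Oxz.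
have pp1 : path (flip O x z) z p by apply: path_flip.
have [O' [tO' hO']] := IH _ _ tO1 pp1 uzp.
exists O'; split => // v.
have h1 := hO' v; have h2 := flip_indeg tO Oxz v.
lia.
Qed.

Lemma TD_move n (c : config n) (a b : 'I_n) :
  TD c -> \max_(i < n) c i < n.-1 -> c a = \max_(i < n) c i ->
  b != a -> c b = \max_(i < n | i != a) c i ->
  1 <= c b /\ TD (fun i : 'I_n => if i == a then (c a).+1
                      else if i == b then (c b).-1 else c i).
Proof.
move=> [O [tO hO]] hmax ha ba hb.
have [Oirr Otot] := tO.
have cyb : forall y, y != a -> c y <= c b.
  by move=> y ya; rewrite hb; apply: (leq_bigmax_cond (P := fun i => i != a)).
case: (ltnP (indeg O b) (c b)) => hib.
  split; first by apply: leq_ltn_trans hib.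
  exists O; split => // j.
  case: (eqVneq j a) => [->|ja]; first by apply: leq_trans (hO a) _.
  case: (eqVneq j b) => [->|jb] //; lia.
have cab : connect O a b.
  apply/negPn/negP => nab.
  pose B := [set j | connect O j b].
  have aB : a \notin B by rewrite inE.
  have bB : b \in B by rewrite inE connect0.
  have out : forall x y, x \in B -> y \notin B -> O x y.
    move=> x y; rewrite !inE => xb yb.
    have xy : x != y by apply: contraNneq yb => <-.
    have := Otot _ _ xy; case: (O x y) => //= Oyx.
    by move: yb; rewrite (connect_trans (connect1 Oyx) xb).
  have ib : indeg O b < #|B|.
    rewrite (cardsD1 b B) bB add1n ltnS; apply: subset_leq_card.
    apply/subsetP => j; rewrite !inE => Ojb.
    rewrite (connect1 Ojb) andbT; apply: contraTneq Ojb => ->; by rewrite Oirr.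
  have iy : forall y, y \notin B -> #|B| <= indeg O y.
    move=> y yB; apply: subset_leq_card; apply/subsetP => x xB.
    by rewrite inE out.
  have allB : forall y, y != a -> y \in B.
    move=> y ya; apply/negPn/negP => yB.
    have := iy y yB; have := hO y; have := cyb y ya; have := hO b; lia.
  have : n.-1 <= #|B|.
    rewrite -[X in X.-1]card_ord -(cardsC1 a); apply: subset_leq_card.
    apply/subsetP => y; rewrite in_setC1; exact: allB.
  have := iy a aB; have := hO a; have := leq_bigmax (F := c) a; rewrite -ha; lia.
have [p pp lastp] := connectP cab.
move: lastp; case: (shortenP pp) => p' pp' up' _ lastp.
have [O' [tO' hO']] := rev_tpath tO pp' up'.
rewrite -lastp in hO'.
have hb' := hO' b; rewrite eqxx (negbTE ba) in hb'.
split; first by have := hO b; lia.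
exists O'; split => // j.
have := hO' j; have := hO j.
case: (eqVneq j a) => [->|ja]; first by rewrite eq_sym (negbTE ba); lia.
case: (eqVneq j b) => [->|jb]; lia.
Qed.

Lemma TD_add n (u : config n) i : TD u -> TD (add_grain u i).
Proof.
move=> [O [tO hO]]; exists O; split => // j.
apply: leq_trans (hO j) _; rewrite /add_grain; case: (j == i) => //.
Qed.

Lemma TD_crt n (u v : config n) : clos_refl_trans _ (@topple_step n) u v -> TD u -> TD v.
Proof.
elim=> [x y /TD_topple|x|x y z _ IH1 _ IH2] //.
by move=> /IH1 /IH2.
Qed.

Lemma TD_reach n (u v : config n) : ssm_reach u v -> TD u -> TD v.
Proof.
elim=> [x y [_ [i [hc _]]] hx|x|x y z _ IH1 _ IH2] //.
- exact: TD_crt hc (TD_add i hx).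
- by move=> /IH1 /IH2.
Qed.

Definition Full n : config n := fun _ => n.-1.
Arguments Full : clear implicits.

Lemma Full_stable n : stable (Full n).
Proof. by move=> i. Qed.

Lemma TD_Full n : TD (Full n).
Proof.
exists (fun x y : 'I_n => x < y); split; last by move=> j; apply: indeg_le; split; [move=> u; rewrite ltnn|
  move=> u v uv /=; move: uv; rewrite -val_eqE /=; case: (ltngtP u v)].
split; first by move=> u; rewrite ltnn.
by move=> u v uv /=; move: uv; rewrite -val_eqE /=; case: (ltngtP u v).
Qed.

Lemma pump_aux n (v : config n) : stable v -> forall k (u : config n),
  \sum_i (v i - u i) = k -> stable u -> (forall i, u i <= v i) -> ssm_reach u v.
Proof.
move=> sv; elim=> [|k IH] u hs su uv.
  have -> : u = v.
    apply: functional_extensionality => i; apply/eqP; rewrite eqn_leq uv /=.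
    have : v i - u i <= 0 by rewrite -hs (bigD1 i) //= leq_addr.
    by rewrite leqn0 subn_eq0.
  exact: rt_refl.
have [i ui] : exists i, u i < v i.
  apply/existsP; apply: contraTT isT => /existsPn hn.
  suff : \sum_i (v i - u i) = 0 by rewrite hs.
  by apply: big1 => i _; apply/eqP; rewrite subn_eq0 leqNgt hn.
apply: rt_trans (rt_step _ _ _ _ _) (IH (add_grain u i) _ _ _).
- split => //; exists i; split; first exact: rt_refl.
  move=> j; rewrite /add_grain; case: (eqVneq j i) => [->|_]; last exact: su.
  by apply: leq_trans (sv i).
- rewrite (bigD1 i) //= /add_grain eqxx.
  under eq_bigr => j ji do rewrite (negbTE ji).
  move: hs; rewrite (bigD1 i) //=; lia.
- move=> j; rewrite /add_grain; case: (eqVneq j i) => [->|_]; last exact: su.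
  by apply: leq_trans (sv i).
- move=> j; rewrite /add_grain; case: (eqVneq j i) => [->|_]; last exact: uv.
  done.
Qed.

Lemma pump n (u v : config n) : stable u -> stable v -> (forall i, u i <= v i) -> ssm_reach u v.
Proof. by move=> su sv uv; apply: (pump_aux sv erefl). Qed.

Lemma card_lt n m : m <= n -> #|[set x : 'I_n | x < m]| = m.
Proof.
elim: m => [|m IH] hm.
  by rewrite (_ : [set x | _] = set0) ?cards0 //; apply/setP => x; rewrite !inE.
rewrite (_ : [set x : 'I_n | x < m.+1] = (Ordinal hm) |: [set x : 'I_n | x < m]).
  by rewrite cardsU1 inE /= ltnn IH // ltnW.
by apply/setP => x; rewrite !inE ltnS leq_eqVlt -val_eqE.
Qed.

Lemma card_gt n k : k < n -> #|[set x : 'I_n | k < x]| = n - k.+1.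
Proof.
move=> hk; have := cardsC [set x : 'I_n | x < k.+1].
rewrite card_ord card_lt // (_ : ~: _ = [set x : 'I_n | k < x]); first lia.
by apply/setP => x; rewrite !inE ltnS -ltnNge.
Qed.

Lemma drain n (A : seq 'I_n) : forall (u v : config n), uniq A ->
  (forall x, x \in A -> u x = n) -> (forall j, v j = if j \in A then n.-1 else u j) ->
  clos_refl_trans _ (@topple_step n) u v.
Proof.
elim: A => [|x A IH] u v /=.
  move=> _ _ hv; have -> : v = u by apply: functional_extensionality.
  exact: rt_refl.
move=> /andP[xA uA] hu hv.
pose u1 : config n := fun j => if j == x then n.-1 else u j.
apply: rt_trans (rt_step _ _ _ _ _) (IH u1 v uA _ _).
- exists x; split; first by rewrite hu ?mem_head.
  exists set0, true; split; first by rewrite inE.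
  move=> j; rewrite /u1 cards0 in_set0 (hu x (mem_head _ _)).
  case: (j == x) => /=; lia.
- move=> y yA; rewrite /u1; case: (eqVneq y x) => [eyx|_].
    by move: xA; rewrite -eyx yA.
  by apply: hu; rewrite inE yA orbT.
- move=> j; rewrite hv /u1 inE; case: (eqVneq j x) => [->|_] //=.
  by case: (x \in A).
Qed.

Definition Pk n (O : rel 'I_n) (k : nat) : config n :=
  fun v => if v < k then n.-1 else #|[set x : 'I_n | (k <= x) && O x v]|.

Lemma Pk_stable n (O : rel 'I_n) k : tourn O -> stable (Pk O k).
Proof.
move=> tO v; rewrite /Pk; case: ifP => // _.
apply: leq_trans (indeg_le v tO); apply: subset_leq_card.
by apply/subsetP => x; rewrite !inE => /andP[_ ->].
Qed.

Lemma card_disjU (T : finType) (A B : {set T}) :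
  (forall x, x \in A -> x \notin B) -> #|A :|: B| = #|A| + #|B|.
Proof.
move=> d; rewrite cardsU (_ : A :&: B = set0) ?cards0 ?subn0 //.
apply/setP => x; rewrite !inE; case: (boolP (x \in A)) => //= /d.
by move/negbTE.
Qed.

Lemma Pk_step n (O : rel 'I_n) k (hk : k < n) : tourn O ->
  ssm_chain_step (Pk O k.+1) (Pk O k).
Proof.
move=> tO; have [Oirr Otot] := tO.
split; first exact: Pk_stable.
pose h := Ordinal hk.
exists h; split; last exact: Pk_stable.
pose S := [set x : 'I_n | (x < k) || ((k < x) && O h x)].
pose u0 := add_grain (Pk O k.+1) h.
pose u1 : config n := fun j => if j == h then u0 h - (#|S| + true) else u0 j + (j \in S).
have u0h : u0 h = n by rewrite /u0 /add_grain eqxx /Pk /= ltnSn; lia.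
apply: (@rt_trans _ _ _ u1); first apply: rt_step.
2: refine (@drain n (filter (fun x : 'I_n => x < k) (enum 'I_n)) u1 (Pk O k) _ _ _).

- exists h; split; first by move: u0h; rewrite /u0 => ->.
  exists S, true; split; first by rewrite inE /= ltnn.
  by move=> j.
- by rewrite filter_uniq ?enum_uniq.
- move=> x; rewrite mem_filter mem_enum andbT => xk.
  have xh : x != h by rewrite -val_eqE /= neq_ltn xk.
  rewrite /u1 (negbTE xh) /u0 /add_grain (negbTE xh) /Pk (leq_trans xk (leqnSn _)).
  rewrite inE xk /=; lia.
- move=> j; rewrite mem_filter mem_enum andbT /Pk.
  case: ifP => // /negbT; rewrite -leqNgt => kj.
  rewrite /u1; case: (eqVneq j h) => [->|jh].
  + rewrite u0h.
    have hS : #|S| = k + #|[set x : 'I_n | (k < x) && O h x]|.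
      rewrite -{1}(card_lt (n := n) (ltnW hk)) -card_disjU; last first.
        by move=> x; rewrite !inE => xk; rewrite negb_and -leqNgt ltnW.
      by apply: eq_card => x; rewrite /S !inE.
    have e1 : [set x : 'I_n | (k <= x) && O x h] = [set x : 'I_n | (k < x) && O x h].
      apply/setP => x; rewrite !inE leq_eqVlt.
      case: (eqVneq (val x) k) => [exk|] //=.
      by rewrite (_ : x = h) ?Oirr ?andbF //; apply: val_inj.
    have e2 : #|[set x : 'I_n | (k < x) && O x h]| + #|[set x : 'I_n | (k < x) && O h x]|
              = n - k.+1.
      rewrite -(card_gt hk) -card_disjU; last first.
        move=> x; rewrite !inE => /andP[kx Oxh]; rewrite negb_and.
        have xh : h != x by rewrite -val_eqE /= neq_ltn kx.
        by rewrite -(Otot _ _ xh) Oxh orbT.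
      apply: eq_card => x; rewrite !inE.
      case: (ltnP k x) => kx //=.
      have xh : h != x by rewrite -val_eqE /= neq_ltn kx.
      by rewrite (Otot _ _ xh); case: (O h x).
    rewrite e1; move: e2 hS; rewrite /nat_of_bool.
    move: (#|S|) (#|[set x : 'I_n | (k < x) && O x h]|) (#|[set x : 'I_n | (k < x) && O h x]|) => s m1 m2.
    lia.
  + have kj' : k < j.
      by rewrite ltn_neqAle kj andbT; move: jh; rewrite -val_eqE /= eq_sym.
    rewrite /u0 /add_grain (negbTE jh) /Pk ltnNge kj' /= inE kj' /= ltnNge (ltnW kj') /=.
    rewrite (cardsD1 h) inE /= leqnn /= addnC; congr (_ + _).
    apply: eq_card => x; rewrite !inE.
    rewrite -val_eqE /= ltn_neqAle eq_sym.
    by rewrite andbA.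
Qed.

Lemma reach_tourn n (O : rel 'I_n) : tourn O -> ssm_reach (Full n) (fun j => indeg O j).
Proof.
move=> tO.
have h : forall k, k <= n -> ssm_reach (Pk O k) (Pk O 0).
  elim=> [|k IH] hk; first exact: rt_refl.
  exact: rt_trans (rt_step _ _ _ _ (Pk_step hk tO)) (IH (ltnW hk)).
have e1 : Pk O n = Full n by apply: functional_extensionality => j; rewrite /Pk ltn_ord.
have e0 : Pk O 0 = (fun j => indeg O j).
  apply: functional_extensionality => j; rewrite /Pk /indeg ltn0.
  by apply: eq_card => x; rewrite !inE.
rewrite -e1 -e0; exact: h.
Qed.

Theorem lemma4p4 (n : nat) (c : 'I_n -> nat) (a b : 'I_n) :
  3 <= n ->
  SR c ->
  \max_(i < n) c i < n.-1 ->
  c a = \max_(i < n) c i ->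
  b != a ->
  c b = \max_(i < n | i != a) c i ->
  1 <= c b /\
  SR (fun i : 'I_n => if i == a then (c a).+1
                      else if i == b then (c b).-1 else c i).
Proof.
move=> n3 [sc rc] hmax ha ba hb.
have cF : ssm_reach c (Full n) := pump sc (@Full_stable n) (fun i => sc i).
have tdc : TD c := TD_reach (rc _ cF) (@TD_Full n).
have [cb1 [O' [tO' hO']]] := TD_move tdc hmax ha ba hb.
split => //.
set c' := fun i : 'I_n => _.
have sc' : stable c'.
  move=> i; rewrite /c'; case: (i == a); first by rewrite ha.
  case: (i == b) => //; apply: leq_trans (sc b); exact: leq_pred.
have rcc' : ssm_reach c c'.
  have p1 : ssm_reach (fun j => indeg O' j) c'.
    by apply: pump sc' hO' => j; apply: indeg_le.
  refine (rt_trans _ _ _ _ _ cF (rt_trans _ _ _ _ _ (reach_tourn tO') p1)).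
split => // d hd.
exact: (rt_trans _ _ _ _ _ (rc d (rt_trans _ _ _ _ _ rcc' hd)) rcc').
Qed.
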